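(* The Gromov--Hausdorff distance $d_{\mathrm{GH}}$ and the modified Gromov--Hausdorff distance $\widehat{d}_{\mathrm{GH}}$ are not Lipschitz-equivalent, even when restricted to finite ultrametric spaces: for every $C>0$ there exist finite ultrametric spaces $X,Y$ with $d_{\mathrm{GH}}(X,Y)> C\,\widehat{d}_{\mathrm{GH}}(X,Y)$.
   Context: A metric space $X$ is ultrametric if $d_X(x,x'')\le\max\{d_X(x,x'),d_X(x',x'')\}$ for all $x,x',x''\in X$. For a map $f:X\to Y$ between metric spaces, $\operatorname{dis}(f)=\sup_{x,x'\in X}|d_X(x,x')-d_Y(f(x),f(x'))|$. For $f:X\to Y$, $g:Y\to X$, $\operatorname{codis}(f,g)=\sup_{x\in X,y\in Y}|d_X(x,g(y))-d_Y(f(x),y)|$. For compact metric spaces, $d_{\mathrm{GH}}(X,Y)$ is the Gromov--Hausdorff distance (infimum over metric spaces $Z$ and isometric embeddings of $X,Y$ into $Z$ of the Hausdorff distance of the images); equivalently $d_{\mathrm{GH}}(X,Y)=\frac12\inf_{f,g}\max\{\operatorname{dis}(f),\operatorname{dis}(g),\operatorname{codis}(f,g)\}$. The modified Gromov--Hausdorff distance is $\widehat{d}_{\mathrm{GH}}(X,Y)=\frac12\max\{\inf_{f:X\to Y}\operatorname{dis}(f),\inf_{g:Y\to X}\operatorname{dis}(g)\}$. *)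

(* Defs.v *)
From HB Require Import structures.
From mathcomp Require Import all_boot all_order all_algebra.
From mathcomp Require Import boolp classical_sets reals.
Set Implicit Arguments. Unset Strict Implicit. Unset Printing Implicit Defensive.
Import Order.TTheory GRing.Theory Num.Theory.
Local Open Scope ring_scope.
Local Open Scope classical_set_scope.

Section GH.
Variable R : realType.

Definition is_metric (T : Type) (d : T -> T -> R) : Prop :=
  [/\ forall x y, d x y = 0 <-> x = y,
      forall x y, d x y = d y x &
      forall x y z, d x z <= d x y + d y z].

Definition is_ultrametric (T : Type) (d : T -> T -> R) : Prop :=
  forall x x' x'', d x x'' <= Num.max (d x x') (d x' x'').

Definition dis (X Y : Type) (dX : X -> X -> R) (dY : Y -> Y -> R) (f : X -> Y) : R :=
  sup [set r | exists x x' : X, r = `| dX x x' - dY (f x) (f x') |].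

Definition codis (X Y : Type) (dX : X -> X -> R) (dY : Y -> Y -> R)
  (f : X -> Y) (g : Y -> X) : R :=
  sup [set r | exists (x : X) (y : Y), r = `| dX x (g y) - dY (f x) y |].

(* Gromov--Hausdorff distance, via the dis/codis formula *)
Definition dGH (X Y : Type) (dX : X -> X -> R) (dY : Y -> Y -> R) : R :=
  2^-1 * inf [set r | exists (f : X -> Y) (g : Y -> X),
     r = Num.max (dis dX dY f) (Num.max (dis dY dX g) (codis dX dY f g))].

Definition dGH_mod (X Y : Type) (dX : X -> X -> R) (dY : Y -> Y -> R) : R :=
  2^-1 * Num.max (inf [set r | exists f : X -> Y, r = dis dX dY f])
                 (inf [set r | exists g : Y -> X, r = dis dY dX g]).

End GH.

(* Main.v *)
Require Import Defs.
From HB Require Import structures.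
From mathcomp Require Import all_boot all_order all_algebra.
From mathcomp Require Import boolp classical_sets reals.
From mathcomp Require Import zify ring lra.
Import Order.TTheory GRing.Theory Num.Theory.
Local Open Scope ring_scope.

Definition dd (N a b : nat) (s t : bool) : nat :=
  if a == b then (if s == t then 0%N else minn a.+1 N) else (maxn a b).+1.

Lemma dd_ultra N a b c s t u :
  ((dd N a c s u <= dd N a b s t) || (dd N a c s u <= dd N b c t u))%N.
Proof.
rewrite /dd.
case: (eqVneq a b) => hab; case: (eqVneq a c) => hac; case: (eqVneq b c) => hbc;
  case: s; case: t; case: u => /=; lia.
Qed.

Lemma ddC N a b s t : dd N a b s t = dd N b a t s.
Proof.
rewrite /dd; case: (eqVneq a b) => hab; case: s; case: t => /=; lia.
Qed.

Lemma dd0 N a b s t : (0 < N)%N -> dd N a b s t = 0%N -> a = b /\ s = t.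
Proof.
rewrite /dd => hN; case: (eqVneq a b) => hab; case: s; case: t => /=; lia.
Qed.

Lemma dd_refl N a s : dd N a a s s = 0%N.
Proof. by rewrite /dd !eqxx. Qed.

Lemma dd_bound N a b s t : (a <= N.*2)%N -> (b <= N.*2)%N -> (dd N a b s t <= N.*2.+1)%N.
Proof. rewrite /dd; case: (eqVneq a b) => hab; case: s; case: t => /=; lia. Qed.

Lemma dd_shift N a b s t :
  (dd N a.-1 b.-1 s t <= dd N a b s t + 2)%N /\ (dd N a b s t <= dd N a.-1 b.-1 s t + 2)%N.
Proof.
rewrite /dd; case: (eqVneq a b) => hab; case: (eqVneq a.-1 b.-1) => hab';
  case: s; case: t => /=; lia.
Qed.

Lemma dd_top N b s t : (0 < N)%N -> (b <= N.*2)%N -> dd N N.*2 b.-1 s t = N.*2.+1.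
Proof. rewrite /dd => hN hb; case: (eqVneq N.*2 b.-1) => h; [lia|]; lia. Qed.

Notation XT N := ('I_(N.*2).+1 * bool)%type.

Definition dn N (x y : XT N) : nat := dd N x.1 y.1 x.2 y.2.
Arguments dn {N}.

Definition dnY N (x y : option (XT N)) : nat :=
  match x, y with
  | None, None => 0%N
  | Some a, Some b => dn a b
  | _, _ => N.*2.+1
  end.
Arguments dnY {N}.

Definition gm N (y : option (XT N)) : XT N :=
  match y with
  | None => (ord_max, false)
  | Some (i, s) => (Ordinal (leq_ltn_trans (leq_pred i) (ltn_ord i)), s)
  end.
Arguments gm {N}.

Lemma dn_bound N (x y : XT N) : (dn x y <= N.*2.+1)%N.
Proof.
case: x y => [i s] [j t]; rewrite /dn /=; apply: dd_bound.
- by have := ltn_ord i; lia.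
- by have := ltn_ord j; lia.
Qed.

Lemma dn0 N (x y : XT N) : (0 < N)%N -> dn x y = 0%N <-> x = y.
Proof.
move=> hN; case: x y => [i s] [j t]; split.
- move=> /(@dd0 N _ _ _ _ hN) [/= hij ->]; congr pair; exact: val_inj.
- by case=> -> ->; rewrite /dn dd_refl.
Qed.

Lemma dnY0 N (x y : option (XT N)) : (0 < N)%N -> dnY x y = 0%N <-> x = y.
Proof.
move=> hN; case: x y => [x|] [y|] //=; split => //.
- by move/(@dn0 N x y hN) => ->.
- by case=> ->; apply/(@dn0 N y y hN).
Qed.

Lemma dnYC N (x y : option (XT N)) : dnY x y = dnY y x.
Proof. case: x y => [[i s]|] [[j t]|] //=; by rewrite /dn ddC. Qed.

Lemma dnY_ultra N (x y z : option (XT N)) :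
  ((dnY x z <= dnY x y) || (dnY x z <= dnY y z))%N.
Proof.
case: x y z => [[i s]|] [[j t]|] [[k u]|] /=; rewrite ?leqnn ?orbT //.
- exact: dd_ultra.
- by rewrite (@dn_bound N (i, s) (k, u)).
Qed.

Lemma dn_ultra N (x y z : XT N) : ((dn x z <= dn x y) || (dn x z <= dn y z))%N.
Proof. case: x y z => [i s] [j t] [k u]; exact: dd_ultra. Qed.

Lemma dnC N (x y : XT N) : dn x y = dn y x.
Proof. case: x y => [i s] [j t]; exact: ddC. Qed.

Set Implicit Arguments. Unset Strict Implicit.
Section Gen.
Variable R : realType.

Lemma metric_of (T : Type) (d : T -> T -> nat) :
  (forall x y, d x y = 0%N <-> x = y) -> (forall x y, d x y = d y x) ->
  (forall x y z, (d x z <= d x y) || (d x z <= d y z))%N ->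
  is_metric (fun x y => (d x y)%:R : R) /\ is_ultrametric (fun x y => (d x y)%:R : R).
Proof.
move=> h0 hC hU; split; [split|].
- move=> x y; split.
  + by move/eqP; rewrite pnatr_eq0 => /eqP /h0.
  + by move/h0 ->.
- by move=> x y; rewrite hC.
- move=> x y z; rewrite -natrD ler_nat; have := hU x y z; lia.
- by move=> x y z; rewrite le_max !ler_nat.
Qed.

Lemma absdiff_le (a b k : nat) : (a <= b + k)%N -> (b <= a + k)%N ->
  `|a%:R - b%:R| <= k%:R :> R.
Proof.
move=> h1 h2; rewrite ler_norml.
have H1 : (a%:R <= b%:R + k%:R :> R) by rewrite -natrD ler_nat.
have H2 : (b%:R <= a%:R + k%:R :> R) by rewrite -natrD ler_nat.
apply/andP; split; lra.
Qed.

Lemma le_dis (X Y : Type) (dX : X -> X -> R) (dY : Y -> Y -> R) (f : X -> Y) (K : R) x x' :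
  (forall x x', `|dX x x' - dY (f x) (f x')| <= K) ->
  `|dX x x' - dY (f x) (f x')| <= dis dX dY f.
Proof.
move=> hK; apply: ub_le_sup; last by exists x, x'.
by exists K => r [a [b ->]].
Qed.

Lemma le_codis (X Y : Type) (dX : X -> X -> R) (dY : Y -> Y -> R) f g (K : R) x y :
  (forall x y, `|dX x (g y) - dY (f x) y| <= K) ->
  `|dX x (g y) - dY (f x) y| <= codis dX dY f g.
Proof.
move=> hK; apply: ub_le_sup; last by exists x, y.
by exists K => r [a [b ->]].
Qed.

Lemma dis_le (X Y : Type) (dX : X -> X -> R) (dY : Y -> Y -> R) (f : X -> Y) (K : R) (x0 : X) :
  (forall x x', `|dX x x' - dY (f x) (f x')| <= K) -> dis dX dY f <= K.
Proof.
move=> hK; apply: ge_sup; first by exists `|dX x0 x0 - dY (f x0) (f x0)|, x0, x0.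
by move=> r [a [b ->]].
Qed.

Lemma dis_ge0 (X Y : Type) (dX : X -> X -> R) (dY : Y -> Y -> R) (f : X -> Y) (K : R) (x0 : X) :
  (forall x x', `|dX x x' - dY (f x) (f x')| <= K) -> 0 <= dis dX dY f.
Proof.
move=> hK; exact: le_trans (normr_ge0 _) (le_dis x0 x0 hK).
Qed.

End Gen.
Unset Implicit Arguments.

Theorem theorem2 (R : realType) (C : R) (hC : 0 < C) :
  exists (X Y : finType) (dX : X -> X -> R) (dY : Y -> Y -> R),
    [/\ (0 < #|X|)%N /\ (0 < #|Y|)%N,
        is_metric dX /\ is_metric dY,
        is_ultrametric dX /\ is_ultrametric dY &
        dGH dX dY > C * dGH_mod dX dY].
Proof.
pose N := (Num.bound (2 * C)).+1.
have hN : (0 < N)%N by [].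
have hNC : 2 * C < N%:R.
  have := @archi_boundP _ (2 * C) ltac:(lra).
  have : ((Num.bound (2 * C))%:R <= N%:R :> R) by rewrite ler_nat /N.
  lra.
pose dX := fun x y : XT N => (dn x y)%:R : R.
pose dY := fun x y : option (XT N) => (dnY x y)%:R : R.
have hM : ((N.*2.+1)%:R = 2 * N%:R + 1 :> R).
  by rewrite -addn1 natrD -muln2 natrM mulrC.
have bX : forall x x' : XT N, 0 <= dX x x' <= (N.*2.+1)%:R.
  by move=> x x'; rewrite ler0n ler_nat dn_bound.
have bY : forall y y' : option (XT N), 0 <= dY y y' <= (N.*2.+1)%:R.
  move=> y y'; rewrite ler0n ler_nat /=.
  by case: y y' => [a|] [b|] //=; rewrite dn_bound.
have KXY : forall a b : R, 0 <= a <= (N.*2.+1)%:R -> 0 <= b <= (N.*2.+1)%:R ->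
    `|a - b| <= (N.*2.+1)%:R.
  move=> a b /andP[? ?] /andP[? ?]; rewrite ler_norml; apply/andP; split; lra.
exists (XT N), (option (XT N)), dX, dY.
split.
- by split; apply/card_gt0P; [exists (ord0, false) | exists None].
- split; [exact: (@metric_of R _ _ (fun x y => @dn0 N x y hN) (@dnC N) (@dn_ultra N)).1
         |exact: (@metric_of R _ _ (fun x y => @dnY0 N x y hN) (@dnYC N) (@dnY_ultra N)).1].
- split; [exact: (@metric_of R _ _ (fun x y => @dn0 N x y hN) (@dnC N) (@dn_ultra N)).2
         |exact: (@metric_of R _ _ (fun x y => @dnY0 N x y hN) (@dnYC N) (@dnY_ultra N)).2].
have hg : forall y y', `|dY y y' - dX (gm y) (gm y')| <= 2%:R.
  move=> y y'; apply: absdiff_le.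
  case: y y' => [[i s]|] [[j t]|] /=; rewrite /dn /=.
  + by have [] := dd_shift N i j s t.
  + by rewrite ddC dd_top //; have := ltn_ord i; lia.
  + by rewrite dd_top //; have := ltn_ord j; lia.
  + by rewrite dd_refl.
  case: y y' => [[i s]|] [[j t]|] /=; rewrite /dn /=.
  + by have [] := dd_shift N i j s t.
  + by rewrite ddC dd_top //; have := ltn_ord i; lia.
  + by rewrite dd_top //; have := ltn_ord j; lia.
  + by rewrite dd_refl.
have hf : forall x x', `|dX x x' - dY (Some x) (Some x')| <= 0.
  by move=> x x'; rewrite /dX /dY /= subrr normr0.
have hm : dGH_mod dX dY <= 1.
  rewrite /dGH_mod.
  have h1 : inf [set r | exists f : XT N -> option (XT N), r = dis dX dY f] <= 2.
    apply: le_trans (_ : dis dX dY Some <= 2).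
      apply: ge_inf; last by exists Some.
      exists 0 => r [f ->].
      exact: (dis_ge0 (ord0, false) (fun x x' => KXY _ _ (bX x x') (bY (f x) (f x')))).
    apply: le_trans (dis_le (ord0, false) hf) _; lra.
  have h2 : inf [set r | exists g : option (XT N) -> XT N, r = dis dY dX g] <= 2.
    apply: le_trans (_ : dis dY dX (@gm N) <= 2).
      apply: ge_inf; last by exists (@gm N).
      exists 0 => r [g ->].
      exact: (dis_ge0 None (fun y y' => KXY _ _ (bY y y') (bX (g y) (g y')))).
    exact: (dis_le None hg).
  have : Num.max (inf [set r | exists f : XT N -> option (XT N), r = dis dX dY f])
                 (inf [set r | exists g : option (XT N) -> XT N, r = dis dY dX g]) <= 2.
    by rewrite ge_max h1 h2.
  lra.
have hl : N%:R <= inf [set r | exists (f : XT N -> option (XT N)) (g : option (XT N) -> XT N),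
     r = Num.max (dis dX dY f) (Num.max (dis dY dX g) (codis dX dY f g))].
  apply: lb_le_inf.
    by exists (Num.max (dis dX dY Some) (Num.max (dis dY dX (@gm N)) (codis dX dY Some (@gm N)))),
      Some, (@gm N).
  move=> r [f [g ->]].
  rewrite leNgt; apply/negP; rewrite !gt_max => /and3P [hdf _ hcd].
  have hcod := fun x y => le_codis (f := f) (g := g) x y
     (fun x y => KXY _ _ (bX x (g y)) (bY (f x) y)).
  have hdis := fun x x' => le_dis (f := f) x x'
     (fun x x' => KXY _ _ (bX x x') (bY (f x) (f x'))).
  have := hcod (g None) None.
  case Hx0: (g None) => [i s].
  rewrite /dX /dY /= /dn /= dd_refl sub0r normrN.
  case Hf: (f (i, s)) => [z|] /=.
    rewrite normr_nat => h; have := lt_le_trans (le_lt_trans h hcd) (le_refl _).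
    rewrite ltr_nat; lia.
  move=> _.
  have [x' hx'] : exists x' : XT N, dn (i, s) x' = N.
    case: (leqP N i.+1) => hi.
      by exists (i, ~~ s); rewrite /dn /dd /= eqxx; case: (s) => /=; lia.
    have hj : (N.-1 < N.*2.+1)%N by lia.
    exists (Ordinal hj, s); rewrite /dn /dd /=.
    case: (eqVneq (nat_of_ord i) N.-1) => h; lia.
  have := hdis (i, s) x'; rewrite /dX /dY /= hx' Hf.
  case: (f x') => [z|] /=.
    move=> h; have := le_lt_trans h hdf; rewrite hM => h'.
    have : `|N%:R - (2 * N%:R + 1)| < N%:R :> R by [].
    rewrite ltr_norml => /andP [h1 h2]; lra.
  rewrite subr0 normr_nat => h; have := le_lt_trans h hdf; by rewrite ltxx.
have hD : N%:R / 2 <= dGH dX dY.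
  rewrite /dGH; lra.
have hCm : C * dGH_mod dX dY <= C.
  have := ler_wpM2l (ltW hC) hm; by rewrite mulr1.
lra.
Qed.
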